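(* Let $\mathbb{K}=(G,M,I)$ be a formal context. The number of meet-irreducible elements of the lattice ${\downarrow}\operatorname{Ext}(\mathbb{K})$ of all closure systems on $G$ contained in $\operatorname{Ext}(\mathbb{K})$ (ordered by inclusion) equals the number of covering pairs $A\prec B$ in the lattice $(\operatorname{Ext}(\mathbb{K}),\subseteq)$, i.e. $|\prec_{\operatorname{Ext}(\mathbb{K})}|$.
   Context: A formal context is a triple $(G,M,I)$ with finite nonempty sets $G$, $M$ and $I\subseteq G\times M$; derivations $A'=\{m\mid\forall a\in A:(a,m)\in I\}$, $B'=\{g\mid\forall b\in B:(g,b)\in I\}$. $\operatorname{Ext}(\mathbb{K})=\{A\subseteq G\mid A''=A\}$. A closure system on $G$ is a family of subsets of $G$ containing $G$ and closed under intersections. $\prec_{\operatorname{Ext}(\mathbb{K})}$ is the covering relation of $(\operatorname{Ext}(\mathbb{K}),\subseteq)$. An element $x$ of a lattice is meet-irreducible if $x\neq\top$ and $x=\bigwedge Y$ implies $x\in Y$. *)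

(* Defs.v *)
From mathcomp Require Import all_boot.
Set Implicit Arguments. Unset Strict Implicit. Unset Printing Implicit Defensive.

Section FCA.
Variables (G M : finType) (I : G -> M -> bool).

Definition intent (A : {set G}) : {set M} := [set m | [forall a in A, I a m]].
Definition extent (B : {set M}) : {set G} := [set g | [forall b in B, I g b]].

Definition Ext : {set {set G}} := [set A | extent (intent A) == A].

Definition closure_system (F : {set {set G}}) : bool :=
  ([set: G] \in F) &&
  [forall S : {set {set G}}, (S \subset F) ==> (\bigcap_(A in S) A \in F)].

Definition downExt (F : {set {set G}}) : bool :=
  closure_system F && (F \subset Ext).

Definition ext_covers (A B : {set G}) : bool :=
  [&& A \in Ext, B \in Ext, A \proper B &
      [forall C in Ext, ~~ ((A \proper C) && (C \proper B))]].
End FCA.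

Section PosetOfSets.
Variable T : finType.
Variable L : pred {set T}.

Definition is_meet (Y : {set {set T}}) (F : {set T}) : bool :=
  [&& L F, [forall H in Y, F \subset H] &
      [forall F', (L F' && [forall H in Y, F' \subset H]) ==> (F' \subset F)]].

Definition is_top (F : {set T}) : bool := L F && [forall H, L H ==> (H \subset F)].

Definition meet_irreducible (F : {set T}) : bool :=
  [&& L F, ~~ is_top F &
      [forall Y : {set {set T}}, ([forall H in Y, L H] && is_meet Y F) ==> (F \in Y)]].
End PosetOfSets.

(* Main.v *)
Require Import Defs.
From mathcomp Require Import all_boot.
Set Implicit Arguments. Unset Strict Implicit. Unset Printing Implicit Defensive.

Section Aux.
Variables (G M : finType) (I : G -> M -> bool).
Implicit Types (A B C D P Q X : {set G}) (S F H Y : {set {set G}}).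

Lemma inExtP A : reflect (extent I (intent I A) = A) (A \in Ext I).
Proof. by rewrite inE; apply: eqP. Qed.

Lemma ext_int_sub A : A \subset extent I (intent I A).
Proof.
apply/subsetP=> g gA; rewrite inE; apply/forallP=> m; apply/implyP.
by rewrite inE => /forallP/(_ g)/implyP; apply.
Qed.

Lemma intent_anti A B : A \subset B -> intent I B \subset intent I A.
Proof.
move=> AB; apply/subsetP=> m; rewrite !inE => /forallP h; apply/forallP=> a.
by apply/implyP=> aA; move/implyP: (h a); apply; apply: (subsetP AB).
Qed.

Lemma extent_anti (A B : {set M}) : A \subset B -> extent I B \subset extent I A.
Proof.
move=> AB; apply/subsetP=> m; rewrite !inE => /forallP h; apply/forallP=> a.
by apply/implyP=> aA; move/implyP: (h a); apply; apply: (subsetP AB).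
Qed.

Lemma Ext_bigcap (S : {set {set G}}) : S \subset Ext I ->
  \bigcap_(A in S) A \in Ext I.
Proof.
move=> SE; apply/inExtP/eqP; rewrite eqEsubset ext_int_sub andbT.
apply/bigcapsP=> A AS.
have /inExtP <- := subsetP SE A AS.
by apply: extent_anti; apply: intent_anti; apply: bigcap_inf.
Qed.

Lemma setT_Ext : [set: G] \in Ext I.
Proof.
have := @Ext_bigcap set0; rewrite sub0set => /(_ isT).
by rewrite big_pred0 // => x; rewrite inE.
Qed.

Lemma closure_systemP F :
  reflect ([set: G] \in F /\ forall S, S \subset F -> \bigcap_(A in S) A \in F)
          (closure_system F).
Proof.
apply: (iffP andP) => [[h1 /forallP h2]|[h1 h2]]; split=> //.
  by move=> S SF; move/implyP: (h2 S); apply.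
by apply/forallP=> S; apply/implyP; apply: h2.
Qed.

Definition Kf (P Q : {set G}) : {set {set G}} :=
  [set C in Ext I | (P \subset C) ==> (Q \subset C)].

Lemma KfP P Q C : reflect (C \in Ext I /\ (P \subset C -> Q \subset C)) (C \in Kf P Q).
Proof.
rewrite [C \in Kf _ _]in_set; apply: (iffP andP) => [[a b]|[a b]]; split=> //.
  by apply/implyP.
by apply/implyP.
Qed.

Lemma downExt_Kf P Q : downExt I (Kf P Q).
Proof.
apply/andP; split; last by apply/subsetP=> C /KfP[].
apply/closure_systemP; split.
  by apply/KfP; split; [apply: setT_Ext| rewrite subsetT].
move=> S SK; apply/KfP; split.
  by apply: Ext_bigcap; apply/subsetP=> C /(subsetP SK)/KfP[].
move=> PX; apply/bigcapsP=> A AS.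
have /KfP[_ h] := subsetP SK A AS; apply: h.
by apply: subset_trans PX _; apply: bigcap_inf.
Qed.

Lemma downExt_Ext : downExt I (Ext I).
Proof.
apply/andP; split=> //; apply/closure_systemP; split; first exact: setT_Ext.
exact: Ext_bigcap.
Qed.

Lemma bigcap2 (C B : {set G}) : \bigcap_(A in [set C; B]) A = C :&: B.
Proof.
apply/eqP; rewrite eqEsubset; apply/andP; split.
  by rewrite subsetI !bigcap_inf // ?set21 ?set22.
by apply/bigcapsP=> A /set2P[]->; rewrite ?subsetIl ?subsetIr.
Qed.

Lemma cover_MI A B : ext_covers I A B ->
  meet_irreducible (downExt I) (Kf A B).
Proof.
case/and4P=> AE BE AB /forallP cov.
have AnK : A \notin Kf A B.
  by apply/KfP=> -[_ /(_ (subxx A))] BA; move/properP: AB=> [_ [x xB xA]]; rewrite (subsetP BA x xB) in xA.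
have BK : B \in Kf A B by apply/KfP; split.
apply/and3P; split; first exact: downExt_Kf.
  apply/negP=> /andP[_ /forallP /(_ (Ext I))]; rewrite downExt_Ext /=.
  by move=> /subsetP /(_ A AE); rewrite (negbTE AnK).
apply/forallP=> Y; apply/implyP=> /andP[/forallP YL /and3P[_ /forallP Ysup /forallP Yinf]].
apply/negPn/negP=> FY.
set F' := A |: Kf A B.
have F'L : downExt I F'.
  apply/andP; split; last first.
    by apply/subsetP=> C /setU1P[->//|/KfP[]].
  have /andP[/closure_systemP[KT KS] _] := downExt_Kf A B.
  apply/closure_systemP; split; first exact: setU1r.
  move=> S SF'.
  have SE : S \subset Ext I.
    by apply/subsetP=> C /(subsetP SF') /setU1P[->//|/KfP[]].
  have XE := Ext_bigcap SE.
  case AS: (A \in S).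
    have XA : \bigcap_(C in S) C \subset A by apply: bigcap_inf.
    case: (eqVneq (\bigcap_(C in S) C) A) => [->|neq]; first exact: setU11.
    apply/setU1r/KfP; split=> // AX; exfalso.
    by move/negP: neq; apply; rewrite eqEsubset XA.
  apply/setU1r/KS/subsetP=> C CS.
  by have /setU1P[CA|//] := subsetP SF' C CS; rewrite -CA CS in AS.
have : F' \subset Kf A B.
  move/implyP: (Yinf F'); apply; rewrite F'L /=.
  apply/forallP=> H; apply/implyP=> HY.
  have HL := implyP (YL H) HY; have FH := implyP (Ysup H) HY.
  rewrite subUset FH andbT sub1set.
  have : Kf A B != H by apply: contraNneq FY => ->.
  rewrite eqEsubset FH /= => /subsetPn [C CH CnK].
  have /andP[/closure_systemP[_ HS] HE] := HL.
  have CE : C \in Ext I by apply: (subsetP HE).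
  have BH : B \in H by apply: (subsetP FH).
  have CBH : C :&: B \in H.
    rewrite -bigcap2; apply: HS; apply/subsetP=> D /set2P[]->//.
  have hAC : A \subset C.
    by apply: contraNT CnK => nAC; apply/KfP; split=> // hAC; rewrite hAC in nAC.
  have BnC : ~~ (B \subset C).
    by apply: contra CnK => BC; apply/KfP; split.
  have CBE : C :&: B \in Ext I by apply: (subsetP HE).
  have := cov (C :&: B); rewrite CBE /= => /negP nb.
  have ACB : A \subset C :&: B by rewrite subsetI hAC (proper_sub AB).
  have CBpB : C :&: B \proper B.
    rewrite properEneq subsetIr andbT; apply: contraNneq BnC => <-.
    exact: subsetIl.
  case: (eqVneq A (C :&: B)) => [->//|neq]; exfalso; apply: nb.
  by rewrite CBpB andbT properEneq neq ACB.
by move/subsetP/(_ A (setU11 _ _)); rewrite (negbTE AnK).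
Qed.


Lemma MI_cover F : meet_irreducible (downExt I) F ->
  exists A B, ext_covers I A B /\ F = Kf A B.
Proof.
move=> /and3P[FL _ /forallP irr].
set Y := [set H | downExt I H && (F \proper H)].
have FnY : F \notin Y by rewrite inE properxx andbF.
have : ~~ is_meet (downExt I) Y F.
  apply: contra FnY => hm; move/implyP: (irr Y); apply; rewrite hm andbT.
  by apply/forallP=> H; apply/implyP; rewrite inE => /andP[].
have Fsub : [forall H in Y, F \subset H].
  by apply/forallP => H; apply/implyP; rewrite inE => /andP[_ /proper_sub].
rewrite /is_meet FL Fsub /= => /forallPn [F'].
rewrite negb_imply => /andP[/andP[F'L /forallP F'Y] F'nF].
have [C CF' CnF] := subsetPn F'nF.
have CY : forall H, downExt I H -> F \proper H -> C \in H.
  move=> H HL FH; have /implyP := F'Y H; rewrite inE HL FH => /(_ isT) /subsetP.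
  by apply.
have /andP[/closure_systemP[FT FS] FE] := FL.
have /andP[_ F'E] := F'L.
have CE : C \in Ext I := subsetP F'E C CF'.
set B := \bigcap_(D in [set D in F | C \subset D]) D.
have BF : B \in F by apply: FS; apply/subsetP=> D; rewrite inE => /andP[].
have CB : C \subset B by apply/bigcapsP=> D; rewrite inE => /andP[].
have Bmin : forall D, D \in F -> C \subset D -> B \subset D.
  by move=> D DF CD; apply: bigcap_inf; rewrite inE DF CD.
have FK : F \subset Kf C B.
  apply/subsetP=> D DF; apply/KfP; split; first exact: (subsetP FE D DF).
  exact: Bmin.
have FeqK : F = Kf C B.
  apply/eqP; rewrite eqEproper FK /=; apply/negP=> FpK.
  have /KfP[_ h] := CY _ (downExt_Kf C B) FpK.
  have BC := h (subxx C).
  have e : C = B by apply/eqP; rewrite eqEsubset CB BC.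
  by move: CnF; rewrite e BF.
exists C, B; split=> //.
apply/and4P; split=> //; first exact: (subsetP FE B BF).
  rewrite properEneq CB andbT; apply: contraNneq CnF => ->; exact: BF.
apply/forallP=> D; apply/implyP=> DE; apply/negP=> /andP[CD DB].
have DnF : D \notin F.
  apply/negP=> DF; have := Bmin D DF (proper_sub CD).
  by move: DB; rewrite properE => /andP[_ /negP].
have FpK : F \proper Kf C D.
  rewrite properEneq; apply/andP; split.
    by apply: contraNneq DnF => ->; apply/KfP; split.
  apply/subsetP=> E EF; apply/KfP; split; first exact: (subsetP FE E EF).
  by move=> CE'; apply: subset_trans (proper_sub DB) (Bmin E EF CE').
have /KfP[_ h] := CY _ (downExt_Kf C D) FpK.
by have := h (subxx C); move: CD; rewrite properE => /andP[_ /negP].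
Qed.

Lemma Kf_inj A B A' B' : A \in Ext I -> B \in Ext I -> A \proper B ->
  A' \in Ext I -> B' \in Ext I -> A' \proper B' ->
  Kf A B = Kf A' B' -> (A, B) = (A', B').
Proof.
move=> AE BE AB A'E B'E A'B' e.
have nK : forall P Q, P \proper Q -> P \notin Kf P Q.
  move=> P Q PQ; apply/negP => /KfP[_ /(_ (subxx P)) QP].
  by move: PQ; rewrite properE QP andbF.
have AA' : A' \subset A.
  apply: contraNT (nK _ _ AB) => h; rewrite e; apply/KfP; split=> // h'.
  by rewrite h' in h.
have A'A : A \subset A'.
  apply: contraNT (nK _ _ A'B') => h; rewrite -e; apply/KfP; split=> // h'.
  by rewrite h' in h.
have eA : A = A' by apply/eqP; rewrite eqEsubset A'A AA'.
subst A'.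
have /KfP[_ h1] : B \in Kf A B' by rewrite -e; apply/KfP; split.
have /KfP[_ h2] : B' \in Kf A B by rewrite e; apply/KfP; split.
have h3 := h1 (proper_sub AB); have h4 := h2 (proper_sub A'B').
by congr pair; apply/eqP; rewrite eqEsubset h3 h4.
Qed.

End Aux.

Theorem proposition6 (G M : finType) (I : G -> M -> bool)
  (hG : 0 < #|G|) (hM : 0 < #|M|) :
  #|[set F : {set {set G}} | meet_irreducible (downExt I) F]| =
  #|[set p : {set G} * {set G} | ext_covers I p.1 p.2]|.
Proof.
set CV := [set p : {set G} * {set G} | ext_covers I p.1 p.2].
have -> : [set F : {set {set G}} | meet_irreducible (downExt I) F] =
          [set Kf I p.1 p.2 | p in CV].
  apply/setP=> F; rewrite inE; apply/idP/imsetP.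
    by move/MI_cover => [A [B [cov ->]]]; exists (A, B); rewrite // inE.
  by move=> [[A B]]; rewrite inE /= => cov ->; apply: cover_MI.
apply: card_in_imset => -[A B] [A' B']; rewrite !inE /=.
move=> /and4P[? ? ? _] /and4P[? ? ? _]; exact: Kf_inj.
Qed.
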